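(* Let $(X,d)$ be a sequentially right $K$-complete quasi-pseudometric space and $\varphi:X\to\mathbb{R}\cup\{\infty\}$ a proper, bounded below, nearly lower semicontinuous function. For $x\in X$ let $S(x)=\{y\in X:\varphi(y)+d(y,x)\le\varphi(x)\}$. 1. If $T:X\to X$ satisfies $d(Tx,x)+\varphi(Tx)\le\varphi(x)$ for all $x\in X$, then there exists $z\in X$ with $\varphi(Tz)=\varphi(z)$. 2. If $T:X\rightrightarrows X$ is a set-valued mapping with $S(x)\cap Tx\neq\emptyset$ for every $x\in X$, then there exists $z\in X$ with $\varphi(z)\in\varphi(Tz)$.
   Context: A quasi-pseudometric on $X$ is $d:X\times X\to[0,\infty)$ with $d(x,x)=0$ and $d(x,z)\le d(x,y)+d(y,z)$ (no symmetry). Topology $\tau_d$: neighbourhood base at $x$ given by $\{y:d(x,y)<r\}$, $r>0$; $x_n\to x$ iff $d(x,x_n)\to0$. A sequence $(x_n)$ is right $K$-Cauchy if for every $\varepsilon>0$ there is $n_\varepsilon$ with $d(x_{n+k},x_n)<\varepsilon$ for all $n\ge n_\varepsilon$, $k\in\mathbb{N}$; $X$ is sequentially right $K$-complete if every right $K$-Cauchy sequence converges. $\varphi$ is proper if finite somewhere; nearly lower semicontinuous if $\varphi(x)\le\liminf_n\varphi(x_n)$ for every sequence with pairwise distinct terms converging to $x$. *)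

(* Defs.v *)
From HB Require Import structures.
From mathcomp Require Import all_boot all_order all_algebra.
From mathcomp Require Import all_classical all_reals all_analysis.
Set Implicit Arguments. Unset Strict Implicit. Unset Printing Implicit Defensive.
Import Order.TTheory GRing.Theory Num.Theory.
Import numFieldTopology.Exports numFieldNormedType.Exports.
Local Open Scope classical_set_scope.
Local Open Scope ring_scope.

Section QPM.
Variables (R : realType) (X : Type).

Definition quasi_pseudometric (d : X -> X -> R) : Prop :=
  (forall x y, 0 <= d x y) /\ (forall x, d x x = 0) /\
  (forall x y z, d x z <= d x y + d y z).

Definition qconv (d : X -> X -> R) (u : nat -> X) (x : X) : Prop :=
  (fun n => d x (u n)) @ \oo --> (0 : R).

Definition right_K_Cauchy (d : X -> X -> R) (u : nat -> X) : Prop :=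
  forall eps : R, 0 < eps -> exists N : nat,
    forall n k : nat, (N <= n)%N -> d (u (n + k)%N) (u n) < eps.

Definition seq_right_K_complete (d : X -> X -> R) : Prop :=
  forall u : nat -> X, right_K_Cauchy d u -> exists x, qconv d u x.

(* phi : X -> R \cup {+oo} is modelled as phi : X -> \bar R never -oo *)
Definition no_minfty (phi : X -> \bar R) : Prop := forall x, phi x != -oo%E.

Definition proper_fun (phi : X -> \bar R) : Prop := exists x, phi x != +oo%E.

Definition bounded_below (phi : X -> \bar R) : Prop :=
  exists m : R, forall x, (m%:E <= phi x)%E.

Definition nearly_lsc (d : X -> X -> R) (phi : X -> \bar R) : Prop :=
  forall (u : nat -> X) (x : X), injective u -> qconv d u x ->
    (phi x <= limn_einf (fun n => phi (u n)))%E.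

Definition Sset (d : X -> X -> R) (phi : X -> \bar R) (x : X) : set X :=
  [set y | (phi y + (d y x)%:E <= phi x)%E].

End QPM.

(* Main.v *)
Require Import Defs.
From HB Require Import structures.
From mathcomp Require Import all_boot all_order all_algebra.
From mathcomp Require Import all_classical all_reals all_analysis.
From mathcomp Require Import lra.
Import Order.TTheory GRing.Theory Num.Theory.
Import numFieldTopology.Exports numFieldNormedType.Exports.
Local Open Scope classical_set_scope.
Local Open Scope ring_scope.

Lemma einf_le_helper (R : realType) (u : nat -> \bar R) (v : nat -> R) (c : R) (n : nat) :
  v @ \oo --> (0 : R) -> (forall m, (n <= m)%N -> (u m <= (c + v m)%:E)%E) ->
  (limn_einf u <= c%:E)%E.
Proof.
move=> v0 Hu.
rewrite limn_einf_lim; have /cvg_lim -> // := @cvg_einfs_sup _ u.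
apply: ub_ereal_sup => _ [N _ <-].
apply/lee_addgt0Pr => e e0.
move/cvgrPdist_lt: v0 => /(_ e e0) [M _ HM].
pose m := maxn (maxn N M) n.
have hm : (M <= m)%N by rewrite /m !leq_max leqnn orbT.
have := HM m hm; rewrite /= sub0r normrN => /ltW /ler_normlP [_ vle].
apply: (le_trans (y := u m)).
  apply: ereal_inf_lbound; exists m => //=; rewrite /m !leq_max leqnn //.
apply: (le_trans (Hu m _)); first by rewrite /m leq_max leqnn orbT.
by rewrite -EFinD lee_fin lerD2l.
Qed.

Theorem theorem3p7 (R : realType) (X : Type) (d : X -> X -> R) (phi : X -> \bar R) :
  quasi_pseudometric d -> seq_right_K_complete d ->
  no_minfty phi -> proper_fun phi -> bounded_below phi -> nearly_lsc d phi ->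
  (forall T : X -> X,
     (forall x, ((d (T x) x)%:E + phi (T x) <= phi x)%E) ->
     exists z, phi (T z) = phi z) /\
  (forall T : X -> set X,
     (forall x, Sset d phi x `&` T x !=set0) ->
     exists z, (phi @` T z) (phi z)).
Proof.
move=> [d0 [dxx dtri]] Hcomp Hnm [x0 Hx0] [mb Hmb] Hlsc.
have P2 : forall T : X -> set X, (forall x, Sset d phi x `&` T x !=set0) ->
    exists z, (phi @` T z) (phi z).
  move=> T HT; apply: contrapT => Hno.
  pose f x := fine (phi x).
  have finE : forall x, phi x \is a fin_num -> phi x = (f x)%:E by move=> x /fineK.
  have memS : forall z y, phi z \is a fin_num ->
      Sset d phi z y <-> (phi y \is a fin_num /\ f y + d y z <= f z).
    move=> z y zf; rewrite /Sset /= (finE z zf) /f; case Ey: (phi y) => [r| |] /=.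
    - by rewrite -EFinD lee_fin; split; [move=> h; split | case].
    - split => [|[]] //; by rewrite addye.
    - by move: (Hnm y); rewrite Ey.
  have Sref : forall z, phi z \is a fin_num -> Sset d phi z z.
    by move=> z zf; apply/memS => //; rewrite dxx addr0.
  have Sfin : forall z y, phi z \is a fin_num -> Sset d phi z y -> phi y \is a fin_num.
    by move=> z y zf /(memS _ _ zf) [].
  have Strans : forall z y w, phi z \is a fin_num -> Sset d phi z y ->
      Sset d phi y w -> Sset d phi z w.
    move=> z y w zf /(memS _ _ zf) [yf hy] /(memS _ _ yf) [wf hw].
    apply/memS => //; split => //; have := dtri w y z; lra.
  have Hstep : forall z, phi z \is a fin_num -> exists2 y, Sset d phi z y & f y < f z.
    move=> z zf; have [y [Sy Ty]] := HT z.
    have [yf hy] := (memS _ _ zf).1 Sy.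
    exists y => //; rewrite lt_neqAle; apply/andP; split.
      apply/eqP => fyz; apply: Hno; exists z; exists y => //.
      by rewrite (finE _ yf) (finE _ zf) fyz.
    by have := d0 y z; lra.
  pose A z := f @` Sset d phi z.
  pose m z := inf (A z).
  have Ane : forall z, phi z \is a fin_num -> A z !=set0.
    by move=> z zf; exists (f z); exists z => //; apply: Sref.
  have Alb : forall z, phi z \is a fin_num -> has_lbound (A z).
    move=> z zf; exists mb => _ [y Sy <-].
    by have := Hmb y; rewrite (finE _ (Sfin _ _ zf Sy)) lee_fin.
  have mle : forall z y, phi z \is a fin_num -> Sset d phi z y -> m z <= f y.
    by move=> z y zf Sy; apply: (ge_inf (Alb _ zf)); exists y.
  have mlt : forall z, phi z \is a fin_num -> m z < f z.
    move=> z zf; have [y Sy fy] := Hstep z zf; exact: (le_lt_trans (mle _ _ zf Sy) fy).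
  have Hnext : forall z, exists y, phi z \is a fin_num ->
      Sset d phi z y /\ f y < (m z + f z) / 2.
    move=> z; have [zf|nzf] := boolP (phi z \is a fin_num); last by exists z.
    have hlt := mlt z zf.
    have hx : m z < (m z + f z) / 2 by lra.
    have [_ [y Sy <-] hy] := inf_lt (Ane z zf) hx.
    by exists y.
  have [nx Hnx] := choice Hnext.
  pose x n := iter n nx x0.
  have x0f : phi x0 \is a fin_num by rewrite fin_numE Hnm Hx0.
  have xf : forall n, phi (x n) \is a fin_num.
    elim=> [|n IH] //=; exact: (Sfin _ _ IH (Hnx _ IH).1).
  have xS : forall n, Sset d phi (x n) (x n.+1) := fun n => (Hnx _ (xf n)).1.
  have xlt : forall n, f (x n.+1) < (m (x n) + f (x n)) / 2 := fun n => (Hnx _ (xf n)).2.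
  have xSk : forall n k, Sset d phi (x n) (x (n + k)%N).
    move=> n; elim=> [|k IH]; first by rewrite addn0; apply: Sref.
    by rewrite addnS; apply: (Strans _ _ _ (xf n) IH (xS _)).
  have xSle : forall n k, (n <= k)%N -> Sset d phi (x n) (x k).
    by move=> n k /subnKC <-.
  pose g n := f (x n) - m (x n).
  have g0 : forall n, 0 <= g n by move=> n; have := mlt _ (xf n); rewrite /g; lra.
  have mmono : forall n, m (x n) <= m (x n.+1).
    move=> n; apply: lb_le_inf; first exact: Ane (xf n.+1).
    move=> _ [y Sy <-]; apply: (mle _ _ (xf n)); exact: Strans (xf n) (xS n) Sy.
  have ghalf : forall n, g n.+1 <= g n / 2.
    by move=> n; have := mmono n; have := xlt n; rewrite /g; lra.
  have gpow : forall n, g n * 2 ^+ n <= g 0%N.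
    elim=> [|n IH]; first by rewrite expr0 mulr1.
    apply: le_trans IH; rewrite exprS mulrA ler_wpM2r ?exprn_ge0 //.
    by have := ghalf n; lra.
  have gsmall : forall eps, 0 < eps -> exists N, forall n, (N <= n)%N -> g n < eps.
    move=> eps e0; exists (Num.Def.trunc (g 0%N / eps)) => n Nn.
    have h1 : g 0%N / eps < n.+1%:R.
      by apply: lt_le_trans (truncnS_gt _) _; rewrite ler_nat ltnS.
    have h1' : g 0%N < eps * n.+1%:R by rewrite mulrC -ltr_pdivrMr.
    have h2 : (n.+1)%:R <= (2:R) ^+ n by rewrite -natrX ler_nat ltn_expl.
    rewrite ltNge; apply/negP => hge.
    have h3 : eps * n.+1%:R <= g n * 2 ^+ n by apply: ler_pM => //; lra.
    by have := gpow n; lra.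
  have dle : forall n k, d (x (n + k)%N) (x n) <= g n.
    move=> n k; have /(memS _ _ (xf n)) [_ h] := xSk n k.
    by have := mle _ _ (xf n) (xSk n k); rewrite /g; lra.
  have cauchy : right_K_Cauchy d x.
    move=> eps e0; have [N HN] := gsmall eps e0; exists N => n k Nn.
    exact: le_lt_trans (dle n k) (HN n Nn).
  have [xs Hxs] := Hcomp x cauchy.
  have fdec : forall n, f (x n.+1) < f (x n).
    by move=> n; have := xlt n; have := mlt _ (xf n); lra.
  have fdeck : forall n k, f (x (n + k.+1)%N) < f (x n).
    move=> n; elim=> [|k IH]; first by rewrite addn1.
    by rewrite addnS; apply: lt_trans (fdec _) IH.
  have xinj : injective x.
    move=> i j eqij; apply/eqP; case: (ltngtP i j) => // hij.
    - have := fdeck i (j - i.+1)%N.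
      by rewrite addnS -addSn subnKC // eqij ltxx.
    - have := fdeck j (i - j.+1)%N.
      by rewrite addnS -addSn subnKC // eqij ltxx.
  have xsS : forall n, Sset d phi (x n) xs.
    move=> n; apply/memS => //.
    have hl := Hlsc x xs xinj Hxs.
    have hle : (limn_einf (fun k => phi (x k)) <= (f (x n) - d xs (x n))%:E)%E.
      apply: (@einf_le_helper _ _ (fun k => d xs (x k)) _ n) => // k nk.
      rewrite (finE _ (xf k)) lee_fin.
      have /(memS _ _ (xf n)) [_ h] := xSle n k nk.
      by have := dtri xs (x k) (x n); lra.
    have hx := le_trans hl hle.
    have xsf : phi xs \is a fin_num.
      rewrite fin_numE Hnm /=; apply/negP => /eqP E; move: hx; by rewrite E leye_eq.
    by split => //; move: hx; rewrite (finE _ xsf) lee_fin; lra.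
  have xsf := Sfin _ _ (xf 0%N) (xsS 0%N).
  have [y Sy fy] := Hstep xs xsf.
  have hpos : 0 < f xs - f y by rewrite subr_gt0.
  have [N HN] := gsmall (f xs - f y) hpos.
  have h1 := mle _ _ (xf N) (Strans _ _ _ (xf N) (xsS N) Sy).
  have /(memS _ _ (xf N)) [_ h2] := xsS N.
  have h3 := HN N (leqnn N).
  by have := d0 xs (x N); rewrite /g in h3; lra.
split => // T HT.
have HT' : forall x, Sset d phi x `&` [set T x] !=set0.
  by move=> x; exists (T x); split => //; rewrite /Sset /= addeC; exact: HT x.
have [z [y Ty Ey]] := P2 (fun x => [set T x]) HT'.
by exists z; rewrite -Ty.
Qed.
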